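(* Let $G$ be a finitely generated group and $\Omega\le\Lambda\le\operatorname{Aut}(G)$ with $\Omega$ of finite index in $\Lambda$. Then $\alpha_{G^\Omega}\sim\alpha_{G^\Lambda}$.
   Context: Fix a finite generating set $\Sigma$ of $G$. For $\Omega\le\operatorname{Aut}(G)$, the $\Omega$-automorphic growth function sends $n$ to the number of $\Omega$-orbits of $G$ containing an element of word length at most $n$ with respect to $\Sigma$; $\alpha_{G^\Omega}$ is its $\sim$-class. For non-decreasing non-zero $f,g\colon\mathbb{N}\to\mathbb{N}$, $f\preccurlyeq g$ means there is $\lambda\in\mathbb{N}\setminus\{0\}$ with $f(n)\le\lambda g(\lambda n+\lambda)+\lambda$ for all $n$, and $f\sim g$ means $f\preccurlyeq g$ and $g\preccurlyeq f$. *)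

(* Defs.v *)
From mathcomp Require Import all_boot all_classical.
From mathcomp Require Import finmap.
From Stdlib Require List.
Set Implicit Arguments. Unset Strict Implicit. Unset Printing Implicit Defensive.

Record group (G : Type) := Group {
  gmul : G -> G -> G;
  gone : G;
  ginv : G -> G;
  gmulA : forall x y z, gmul x (gmul y z) = gmul (gmul x y) z;
  gmul1g : forall x, gmul gone x = x;
  gmulg1 : forall x, gmul x gone = x;
  gmulVg : forall x, gmul (ginv x) x = gone;
  gmulgV : forall x, gmul x (ginv x) = gone }.

Section GrowthDefs.
Variables (G : Type) (grp : group G).
Local Open Scope classical_set_scope.

Definition ball (S : seq G) (n : nat) : set G :=
  [set g | exists w : seq G,
      (size w <= n)%N /\
      (forall s, List.In s w -> List.In s S \/ List.In (ginv grp s) S) /\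
      g = foldr (gmul grp) (gone grp) w].

Definition generates (S : seq G) : Prop := forall g : G, exists n, ball S n g.

Definition is_aut (f : G -> G) : Prop :=
  bijective f /\ forall x y, f (gmul grp x y) = gmul grp (f x) (f y).

Definition aut_subgroup (Om : set (G -> G)) : Prop :=
  [/\ (forall f, Om f -> is_aut f),
      Om (fun x => x),
      (forall f g, Om f -> Om g -> Om (f \o g)) &
      (forall f, Om f -> exists2 g, Om g & cancel f g /\ cancel g f)].

Definition finite_index (Om La : set (G -> G)) : Prop :=
  exists reps : seq (G -> G),
    (forall r, List.In r reps -> La r) /\
    (forall l, La l -> exists r, List.In r reps /\
                        exists2 w, Om w & l = r \o w).

Definition orbit (Om : set (G -> G)) (g : G) : set G := [set f g | f in Om].

Definition aut_growth (Om : set (G -> G)) (S : seq G) (n : nat) : nat :=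
  #|` fset_set [set orbit Om g | g in ball S n] |%fset.

End GrowthDefs.

Definition preceq (f g : nat -> nat) : Prop :=
  exists lam : nat, (0 < lam)%N /\
    forall n, (f n <= lam * g (lam * n + lam) + lam)%N.

Definition gsim (f g : nat -> nat) : Prop := preceq f g /\ preceq g f.

(* Main.v *)
Require Import Defs.
From mathcomp Require Import all_boot all_classical.
From mathcomp Require Import finmap.
From Stdlib Require List.
Set Implicit Arguments. Unset Strict Implicit. Unset Printing Implicit Defensive.
Local Open Scope classical_set_scope.

Lemma card_sub (T : choiceType) (A B : set T) : finite_set B -> A `<=` B ->
  finite_set A /\ (#|` fset_set A| <= #|` fset_set B|)%N.
Proof.
move=> fB AB; have fA := sub_finite_set AB fB; split => //.
by apply: fsubset_leq_card; rewrite -fset_set_sub.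
Qed.

Lemma card_img (T U : choiceType) (f : T -> U) (A : set T) : finite_set A ->
  (#|` fset_set (f @` A)| <= #|` fset_set A|)%N.
Proof.
move=> fA; rewrite fset_set_image //.
by apply: leq_trans (leq_imfset_card _ _ _) _; rewrite /enum_finmem /=.
Qed.

Lemma card_cover (T U : choiceType) (X : Type) (f : X -> U -> T) (B : set U)
  (rs : seq X) (A : set T) :
  finite_set B ->
  A `<=` [set y | exists r, List.In r rs /\ exists2 b, B b & y = f r b] ->
  (#|` fset_set A| <= size rs * #|` fset_set B|)%N.
Proof.
move=> fB.
set C := fun rs => [set y | exists r, List.In r rs /\ exists2 b, B b & y = f r b].
suff H : forall rs, finite_set (C rs) /\
   (#|` fset_set (C rs)| <= size rs * #|` fset_set B|)%N.
  move=> AC; have [fC hC] := H rs; have [_ h] := card_sub fC AC.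
  exact: leq_trans h hC.
move=> {A}; elim=> [|r rs0 [fC hC]].
  have sub : C [::] `<=` set0 by move=> y [r [[]]].
  have [f0 h0] := card_sub (@finite_set0 _) sub.
  by split => //; rewrite fset_set0 cardfs0 in h0.
have fI : finite_set (f r @` B) by exact: finite_image.
have fU : finite_set (f r @` B `|` C rs0) by rewrite finite_setU.
have sub : C (r :: rs0) `<=` f r @` B `|` C rs0.
  move=> y [r' [[<-|Hin] [b Bb ->]]].
    by left; exists b.
  by right; exists r'; split => //; exists b.
have [f1 h1] := card_sub fU sub.
split => //; apply: leq_trans h1 _.
rewrite fset_setU //; apply: leq_trans (leq_card_fsetU _ _) _.
rewrite /= mulSn; apply: leq_add => //; exact: card_img.
Qed.

Lemma finite_inlist (T : Type) (s : seq T) : finite_set [set x | List.In x s].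
Proof.
elim: s => [|a s IH].
  by apply: sub_finite_set (@finite_set0 T) => x [].
have : finite_set ([set a] `|` [set x | List.In x s]) by rewrite finite_setU; split => //; exact: finite_set1.
apply: sub_finite_set => x [<-|h]; [by left|by right].
Qed.

Section Main.
Variables (G : Type) (grp : group G).

Lemma ginvK x : ginv grp (ginv grp x) = x.
Proof.
rewrite -[LHS](gmulg1 grp) -(gmulVg grp x) gmulA gmulVg gmul1g //.
Qed.

Lemma ball_mono S n m : (n <= m)%N -> ball grp S n `<=` ball grp S m.
Proof.
move=> nm g [w [hw [hin ->]]]; exists w; split => //; exact: leq_trans hw nm.
Qed.

Lemma ball_finite S n : finite_set (ball grp S n).
Proof.
set L := [set s | List.In s S \/ List.In (ginv grp s) S].
have fL : finite_set L.
  have : finite_set ([set x | List.In x S] `|` ginv grp @` [set x | List.In x S]).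
    by rewrite finite_setU; split; [exact: finite_inlist|apply: finite_image; exact: finite_inlist].
  apply: sub_finite_set => s [h|h]; first by left.
  by right; exists (ginv grp s) => //; rewrite ginvK.
elim: n => [|n IH].
  apply: sub_finite_set (finite_set1 (gone grp)) => g [w [hw [_ ->]]].
  by case: w hw.
have : finite_set (ball grp S n `|` [set gmul grp p.1 p.2 | p in L `*` ball grp S n]).
  by rewrite finite_setU; split => //; apply: finite_image; exact: finite_setX.
apply: sub_finite_set => g [w [hw [hin ->]]].
case: w hw hin => [|a w] hw hin.
  by left; exists [::]; split => //; split => // s [].
right; exists (a, foldr (gmul grp) (gone grp) w) => //; split => /=.
  by apply: hin; left.
by exists w; split => //; split => // s hs; apply: hin; right.
Qed.

Lemma orbit_eq (Om : set (G -> G)) w y : aut_subgroup grp Om -> Om w ->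
  Defs.orbit Om (w y) = Defs.orbit Om y.
Proof.
move=> [_ _ hc hi] Ow; apply/seteqP; split => x [f Of <-].
  by exists (f \o w) => //; exact: hc.
have [w' Ow' [c1 c2]] := hi w Ow.
by exists (f \o w'); [exact: hc | rewrite /= c1].
Qed.

Lemma growth_finite (Om : set (G -> G)) S n :
  finite_set [set Defs.orbit Om g | g in ball grp S n].
Proof. apply: finite_image; exact: ball_finite. Qed.

Lemma growth_mono (Om : set (G -> G)) S n m : (n <= m)%N ->
  (aut_growth grp Om S n <= aut_growth grp Om S m)%N.
Proof.
move=> nm; rewrite /aut_growth.
apply: (proj2 (card_sub (growth_finite Om S m) _)).
by move=> O [g bg <-]; exists g => //; exact: ball_mono bg.
Qed.

Definition rep (P : set G) : G :=
  match pselect (exists g, P g) with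
  | left e => proj1_sig (cid e)
  | right _ => gone grp
  end.

Lemma repP (P : set G) : (exists g, P g) -> P (rep P).
Proof.
move=> e; rewrite /rep; case: pselect => [e'|//].
exact: proj2_sig (cid e').
Qed.

End Main.

Theorem mainTheorem16 (G : Type) (grp : group G) (S : seq G)
  (hS : generates grp S)
  (Om La : (G -> G) -> Prop)
  (hOm : aut_subgroup grp Om) (hLa : aut_subgroup grp La)
  (hsub : forall f, Om f -> La f)
  (hfin : finite_index Om La) :
  gsim (aut_growth grp Om S) (aut_growth grp La S).
Proof.
have [hLa1 _ hLa3 hLa4] := hLa.
have [hOm1 _ hOm3 hOm4] := hOm.
have [reps [repsLa repsCov]] := hfin.
have [reps' hreps'] : exists reps' : seq (G -> G), forall r, List.In r reps ->
    exists r', List.In r' reps' /\ cancel r r' /\ cancel r' r.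
  elim: reps repsLa {repsCov} => [|r rs IH] hr.
    by exists [::] => r [].
  have [rs' Hrs'] := IH (fun x h => hr x (or_intror h)).
  have [r' _ [c1 c2]] := hLa4 r (hr r (or_introl erefl)).
  exists (r' :: rs') => x [<-|h].
    by exists r'; split => //; left.
  have [x' [h1 h2]] := Hrs' x h; exists x'; split; [by right | exact: h2].
have key : forall m, La m -> exists r', List.In r' reps' /\
    exists2 w', Om w' & forall x, m x = w' (r' x).
  move=> m Lm; have [m' Lm' [cm1 cm2]] := hLa4 m Lm.
  have [r [rin [w Ow em']]] := repsCov m' Lm'.
  have [r' [r'in [cr1 cr2]]] := hreps' r rin.
  have [w' Ow' [cw1 cw2]] := hOm4 w Ow.
  exists r'; split => //; exists w' => // x.
  have : m' (m x) = x by rewrite cm1.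
  rewrite em' /= => e; by rewrite -[X in _ = w' (r' X)]e cr1 cw1.
set k := size reps'.
have b1 : forall n, (aut_growth grp Om S n <= k * aut_growth grp La S n)%N.
  move=> n; rewrite /aut_growth; apply: (@card_cover _ _ _
    (fun r P => Defs.orbit Om (r (rep grp P)))); first exact: growth_finite.
  move=> O [g bg <-].
  have : Defs.orbit La g (rep grp (Defs.orbit La g)).
    by apply: repP; exists g; exists id => //; have [] := hLa.
  move=> [l Ll el].
  have [l' Ll' [cl1 cl2]] := hLa4 l Ll.
  have [r' [r'in [w' Ow' ew]]] := key l' Ll'.
  exists r'; split => //; exists (Defs.orbit La g); first by exists g.
  by rewrite -el -(@orbit_eq _ _ _ w' (r' (l g)) hOm Ow') -ew cl1.
have b2 : forall n, (aut_growth grp La S n <= aut_growth grp Om S n)%N.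
  move=> n; rewrite /aut_growth.
  set A := [set Defs.orbit Om g | g in ball grp S n].
  have fA : finite_set A by exact: growth_finite.
  have sub : [set Defs.orbit La g | g in ball grp S n] `<=`
     (fun O => Defs.orbit La (rep grp O)) @` A.
    move=> P [g bg <-]; exists (Defs.orbit Om g); first by exists g.
    have : Defs.orbit Om g (rep grp (Defs.orbit Om g)).
      by apply: repP; exists g; exists id => //; have [] := hOm.
    move=> [w Ow <-]; by rewrite (@orbit_eq _ _ _ _ _ hLa (hsub _ Ow)).
  have [_ h] := card_sub (finite_image (fun O => Defs.orbit La (rep grp O)) fA) sub.
  exact: leq_trans h (card_img _ fA).
split.
  exists k.+1; split => // n.
  apply: leq_trans (b1 n) _; apply: leq_trans (leq_addr _ _).
  apply: leq_mul; first exact: leqnSn.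
  apply: growth_mono; apply: leq_trans (leq_addr _ _).
  by rewrite mulSn leq_addr.
exists 1; split => // n; rewrite !mul1n.
apply: leq_trans (b2 n) _; apply: leq_trans (leq_addr _ _).
by apply: growth_mono; rewrite addn1.
Qed.
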